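(* Let $k\ge 1$ and $l\ge 1$ be integers and let $l_1=l_2=\cdots=l_k=l$. Then the generalized theta graph $\Theta_{l_1,l_2,\dots,l_k}$ is cyclically orderable.
   Context: The generalized theta graph $\Theta_{l_1,\dots,l_k}$ (with $l_1\le\cdots\le l_k$) is the graph obtained by joining two distinct vertices by $k$ internally vertex-disjoint paths of lengths $l_1,l_2,\dots,l_k$ (if several paths have length $1$ this yields parallel edges). A cyclic base ordering (CBO) of a connected graph $G$ is a bijection $\mathcal{O}:E(G)\to\{1,\dots,|E(G)|\}$ such that for every $i\in\{1,\dots,|E(G)|\}$ the edges $\mathcal{O}^{-1}(i),\dots,\mathcal{O}^{-1}(i+|V(G)|-2)$ (indices taken cyclically modulo $|E(G)|$) induce a spanning tree of $G$; $G$ is cyclically orderable if it has a CBO. *)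

(* Defs.v *)
From mathcomp Require Import all_boot.
Set Implicit Arguments. Unset Strict Implicit. Unset Printing Implicit Defensive.

(* A finite multigraph: vertex type V, edge type E, and for each edge its
   (unordered) pair of end-vertices [ends e] (parallel edges allowed). *)

Definition sub_adj (V E : finType) (ends : E -> V * V) (F : {set E}) : rel V :=
  [rel x y | [exists e in F, (ends e == (x, y)) || (ends e == (y, x))]].

(* F induces a spanning tree: the subgraph (V, F) is connected, and it is
   acyclic, i.e. every edge of F is a bridge of (V, F) (its endpoints are
   disconnected once it is removed; in particular F contains no loop and no
   pair of parallel edges). *)
Definition spanning_tree (V E : finType) (ends : E -> V * V) (F : {set E}) : Prop :=
  (forall x y : V, connect (sub_adj ends F) x y) /\
  (forall e, e \in F -> ~~ connect (sub_adj ends (F :\ e)) (ends e).1 (ends e).2).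

(* Cyclic base ordering, 0-indexed: O : E -> 'I_m (m = |E|) bijective, and for
   every i the edges with positions i, i+1, ..., i+|V|-2 (mod m) induce a
   spanning tree. *)
Definition cyclic_base_ordering (V E : finType) (ends : E -> V * V)
    (O : E -> 'I_#|E|) : Prop :=
  bijective O /\
  forall i : 'I_#|E|,
    spanning_tree ends [set e | (O e + #|E| - i) %% #|E| < #|V| - 1].

Definition cyclically_orderable (V E : finType) (ends : E -> V * V) : Prop :=
  exists O : E -> 'I_#|E|, cyclic_base_ordering ends O.

(* Vertices: 'I_(k*(l-1)+2); 0 and 1 are the two branch vertices; the j-th
   internal vertex (1 <= j <= l-1) of path i is 2 + i*(l-1) + (j-1).
   Edges: pairs (i, j) : 'I_k * 'I_l; edge (i,j) joins positions j and j+1 of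
   path i, where position 0 is vertex 0 and position l is vertex 1. *)
Definition theta_V (k l : nat) := 'I_(k * (l - 1)).+2.
Definition theta_E (k l : nat) := ('I_k * 'I_l)%type.

Definition theta_pos (k l : nat) (i : 'I_k) (j : nat) : nat :=
  if j == 0 then 0 else if j == l then 1 else 2 + i * (l - 1) + (j - 1).

Definition theta_ends (k l : nat) (e : theta_E k l) : theta_V k l * theta_V k l :=
  (inord (theta_pos l e.1 e.2), inord (theta_pos l e.1 e.2.+1)).

(* Main.v *)
Require Import Defs.
From mathcomp Require Import all_boot.
From mathcomp Require Import zify.
Set Implicit Arguments. Unset Strict Implicit. Unset Printing Implicit Defensive.

Lemma mk (k p q : nat) : 0 < k -> (p < q /\ p * k + k <= q * k) \/ (p = q /\ p * k = q * k)
  \/ (q < p /\ q * k + k <= p * k).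
Proof.
move=> k0; case: (ltngtP p q) => h; [left|right; right|right; left]; split => //.
- by rewrite addnC -mulSn leq_mul2r h orbT.
- by rewrite addnC -mulSn leq_mul2r h orbT.
- by rewrite h.
Qed.
Lemma A (k l a0 qi t : nat) : 0 < k -> 0 < l -> a0 < k -> qi < l -> t < l ->
  let i := qi * k + a0 in let x := t * k + a0 in
  (if i <= x then x - i else x + l * k - i) < (l - 1) * k + 1.
Proof. move=> k0 *. simpl.
have := (@mk k qi t k0); have := (@mk k t (l-1) k0); have := (@mk k (l - 1) l k0).
case: ifP => ?; lia. Qed.
Lemma B (k l a0 qi t1 t2 b : nat) : 0 < k -> 0 < l -> a0 < k -> qi < l -> t1 < l -> t2 < l -> b < k ->
  let i := qi * k + a0 in let x1 := t1 * k + b in let x2 := t2 * k + b in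
  (l - 1) * k + 1 <= (if i <= x1 then x1 - i else x1 + l * k - i) ->
  (l - 1) * k + 1 <= (if i <= x2 then x2 - i else x2 + l * k - i) -> t1 = t2.
Proof. move=> k0 ? ? ? ? ? ? /= h1 h2; move: h1 h2.
have := (@mk k qi t1 k0); have := (@mk k t1 (l-1) k0); have := (@mk k (l - 1) l k0).
have := (@mk k qi t2 k0); have := (@mk k t2 (l-1) k0); have := (@mk k t1 t2 k0).
do 2 case: ifP => ?; lia. Qed.
Lemma C (k l a0 qi b : nat) : 0 < k -> 0 < l -> a0 < k -> qi < l -> b < k -> b != a0 ->
  exists2 t, t < l &
  let i := qi * k + a0 in let x := t * k + b in
  (l - 1) * k + 1 <= (if i <= x then x - i else x + l * k - i).
Proof.
move=> k0 ? ? ? ? ba.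
case: (ltngtP b a0) ba => // hb _.
  exists qi => //=; have := (@mk k (l - 1) l k0); case: ifP => ?; lia.
case: (posnP qi) => hq.
  exists (l - 1); first lia.
  rewrite /= hq; have := (@mk k (l - 1) l k0); case: ifP => ?; lia.
exists qi.-1; first lia.
have e : qi = qi.-1.+1 by lia.
rewrite /=; move: (qi.-1) e => q ->; rewrite mulSn.
have := (@mk k (l - 1) l k0); case: ifP => ?; lia.
Qed.

Section Theta.
Variables k l : nat.
Hypothesis hk : 0 < k.
Hypothesis hl : 0 < l.
Local Notation V := (theta_V k l).
Local Notation E := (theta_E k l).
Local Notation ends := (@theta_ends k l).

Definition pos (b : 'I_k) (p : nat) : V := inord (theta_pos l b p).

Lemma ends_pos (e : E) : ends e = (pos e.1 e.2, pos e.1 e.2.+1).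
Proof. by []. Qed.

Lemma theta_pos_lt (b : 'I_k) p : p <= l -> theta_pos l b p < (k * (l - 1)).+2.
Proof.
rewrite /theta_pos => hp.
case: eqP => // p0; case: eqP => // pl.
have hb := ltn_ord b.
have : b * (l - 1) + (p - 1) < k * (l - 1); last by lia.
have : b.+1 * (l-1) <= k * (l - 1) by rewrite leq_mul2r hb orbT.
rewrite mulSn. lia.
Qed.

Lemma val_pos b p : p <= l -> (pos b p : nat) = theta_pos l b p.
Proof. by move=> hp; rewrite /pos inordK // theta_pos_lt. Qed.

Lemma pos0 b b' : pos b 0 = pos b' 0. Proof. by []. Qed.
Lemma posl b b' : pos b l = pos b' l.
Proof. by rewrite /pos /theta_pos eqxx; case: (l == 0). Qed.

Definition dec_b (v : nat) := (v - 2) %/ (l - 1).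
Definition dec_p (v : nat) := (v - 2) %% (l - 1) + 1.

Lemma dec_pos (b : 'I_k) p : 0 < p < l ->
  [/\ dec_b (theta_pos l b p) = b, dec_p (theta_pos l b p) = p &
      1 < theta_pos l b p].
Proof.
case/andP=> p0 pl.
have -> : theta_pos l b p = 2 + (b * (l - 1) + (p - 1)).
  rewrite /theta_pos; case: eqP => [|_]; first by lia.
  by case: eqP => [|_]; [lia | rewrite addnA].
have l1 : 0 < l - 1 by lia.
rewrite /dec_b /dec_p addKn divnMDl // modnMDl divn_small ?modn_small. all: try lia. split; lia.
Qed.

Lemma dec_vertex (v : V) : 1 < v -> exists b : 'I_k, exists2 p, 0 < p < l & v = pos b p.
Proof.
move=> v1.
have hv := ltn_ord v.
have l1 : 0 < l - 1.
  case: (posnP (l - 1)) => // h.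
  have : k * (l - 1) = 0 by rewrite h muln0.
  lia.
have hb : (v - 2) %/ (l - 1) < k by rewrite ltn_divLR //; lia.
exists (Ordinal hb); exists ((v - 2) %% (l - 1)).+1.
  have := ltn_pmod (v - 2) l1; lia.
apply: val_inj => /=; rewrite val_pos; last by have := ltn_pmod (v - 2) l1; lia.
rewrite /theta_pos /=.
have hm := ltn_pmod (v - 2) l1.
have -> : (((v - 2) %% (l - 1)).+1 == l) = false by apply/eqP; lia.
have := divn_eq (v - 2) (l - 1).
move: ((v - 2) %/ (l - 1)) ((v - 2) %% (l - 1)) hm => q r hr.
move: (q * (l - 1)) => w. lia.
Qed.


Lemma sub_adj_sym (F : {set E}) : symmetric (sub_adj ends F).
Proof.
move=> x y; apply/existsP/existsP => -[e /andP[he h]]; exists e;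
  by rewrite he orbC.
Qed.

Lemma edge_conn (F : {set E}) (b : 'I_k) (t : 'I_l) : (b, t) \in F ->
  connect (sub_adj ends F) (pos b t) (pos b t.+1).
Proof.
move=> hF; apply: connect1; apply/existsP; exists (b, t).
by rewrite hF ends_pos /= eqxx.
Qed.

Lemma path_down (F : {set E}) (b : 'I_k) p : p <= l ->
  (forall t : 'I_l, t < p -> (b, t) \in F) ->
  connect (sub_adj ends F) (pos b 0) (pos b p).
Proof.
elim: p => [|p IH] hp H; first exact: connect0.
apply: connect_trans (IH (ltnW hp) _) _.
  by move=> t ht; apply: H; rewrite ltnS ltnW.
exact: (edge_conn (t := Ordinal hp)) (H _ _).
Qed.

Lemma path_up (F : {set E}) (b : 'I_k) p : p <= l ->
  (forall t : 'I_l, p <= t -> (b, t) \in F) ->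
  connect (sub_adj ends F) (pos b p) (pos b l).
Proof.
move=> hp; move eq_d : (l - p) => d.
elim: d p hp eq_d => [|d IH] p hp eq_d H.
  by have -> : p = l by lia.
have hpl : p < l by lia.
apply: connect_trans (edge_conn (t := Ordinal hpl) (H _ _)) _ => //=.
apply: IH; first by [] ; first by lia.
by move=> t ht; apply: H; rewrite ltnW.
Qed.

Lemma cut_lemma (G : {set E}) (S : pred V) x y :
  (forall f, f \in G -> S (ends f).1 = S (ends f).2) ->
  S x != S y -> ~~ connect (sub_adj ends G) x y.
Proof.
move=> hS hxy; apply: contra hxy => hc.
have cl : closed (sub_adj ends G) S.
  move=> u w /existsP[f /andP[hf /orP[] /eqP hu]];
    by have := hS f hf; rewrite hu //= => ->.
by have := closed_connect cl hc; rewrite !unfold_in => ->.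
Qed.

Definition Sgen (z0 z1 : bool) (g : 'I_k -> nat -> bool) (v : nat) : bool :=
  if v == 0 then z0 else if v == 1 then z1
  else [exists b' : 'I_k, (val b' == dec_b v) && g b' (dec_p v)].

Lemma Sgen_pos z0 z1 g b p : p <= l ->
  Sgen z0 z1 g (pos b p) = if p == 0 then z0 else if p == l then z1 else g b p.
Proof.
move=> hp; rewrite val_pos //.
case: (eqVneq p 0) => [->|p0]; first by [].
case: (eqVneq p l) => [->|pl].
  by rewrite /theta_pos eqxx; case: eqP => //; lia.
have [db dp tp] : [/\ dec_b (theta_pos l b p) = b, dec_p (theta_pos l b p) = p &
      1 < theta_pos l b p] by apply: dec_pos; lia.
rewrite /Sgen.
have -> : (theta_pos l b p == 0) = false by apply/eqP; lia.
have -> : (theta_pos l b p == 1) = false by apply/eqP; lia.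
rewrite db dp; apply/existsP/idP => [[b' /andP[/eqP/val_inj -> //]]|hg].
by exists b; rewrite eqxx.
Qed.

Lemma theta_tree (F : {set E}) (a0 : 'I_k) :
  (forall t, (a0, t) \in F) ->
  (forall b, b != a0 -> exists t, (b, t) \notin F) ->
  (forall b t1 t2, (b, t1) \notin F -> (b, t2) \notin F -> t1 = t2) ->
  spanning_tree ends F.
Proof.
move=> H1 H2 H3; split.
  have symc := sym_connect_sym (sub_adj_sym F).
  have c1 : connect (sub_adj ends F) (pos a0 0) (pos a0 l).
    exact: path_down.
  suff h0 : forall x, connect (sub_adj ends F) (pos a0 0) x.
    by move=> x y; apply: connect_trans (h0 y); rewrite symc.
  move=> x.
  case: (ltnP 1 x) => [x1|].
    have [b [p /andP[p0 pl] ->]] := dec_vertex x1.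
    case: (eqVneq b a0) => [->|nb]; first by apply: path_down => //; exact: ltnW.
    have [c hc] := H2 b nb.
    case: (leqP p c) => hpc.
      rewrite (pos0 a0 b); apply: path_down; first exact: ltnW.
      move=> t ht; apply: contraT => ht'.
      by have := H3 _ _ _ ht' hc; move=> e; move: ht; rewrite e; lia.
    apply: connect_trans c1 _; rewrite symc (posl a0 b).
    apply: path_up; first exact: ltnW.
    move=> t ht; apply: contraT => ht'.
    by have := H3 _ _ _ ht' hc; move=> e; move: ht; rewrite e; lia.
  rewrite leq_eqVlt ltnS leqn0 => /orP[] /eqP hx.
    suff -> : x = pos a0 l by [].
    by apply: val_inj => /=; rewrite val_pos // /theta_pos eqxx; case: eqP => //; lia.
  suff -> : x = pos a0 0 by exact: connect0.
  by apply: val_inj => /=; rewrite val_pos.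
move=> [a j] he; rewrite ends_pos /=.
have inFD : forall b t, ((b, t) \in F :\ (a, j)) = ((b, t) != (a, j)) && ((b, t) \in F).
  by move=> b t; rewrite !inE.
case: (eqVneq a a0) => [ea|na].
  subst a.
  pose cut (b : 'I_k) : nat := if [pick t | (b, t) \notin F] is Some t then val t else val j.
  have cut_lt b : cut b < l by rewrite /cut; case: pickP => [t _|_]; exact: ltn_ord.
  have cuta0 : cut a0 = j.
    rewrite /cut; case: pickP => // t; by rewrite H1.
  have cutne b (t : 'I_l) : (b, t) \in F :\ (a0, j) -> (t : nat) != cut b.
    rewrite inFD /cut => /andP[ne hin]; case: pickP => [c hc|hn].
      apply/eqP => /val_inj et; subst t; by rewrite hin in hc.
    case: (eqVneq b a0) => [eb|nb].
      by subst b; apply: contra ne => /eqP/val_inj ->.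
    have [c hc] := H2 b nb; by rewrite hn in hc.
  apply: (cut_lemma (S := fun v : V => Sgen true false (fun b p => p <= cut b) v)).
    move=> [b t] hf; rewrite ends_pos /= !Sgen_pos //; last exact: ltnW.
    have := cutne b t hf; have := cut_lt b; have := ltn_ord t.
    move=> *; repeat case: ifP => ?; lia.
  rewrite /= !Sgen_pos //; last exact: ltnW.
  have := ltn_ord j; rewrite cuta0.
  repeat case: ifP => ?; lia.
have [c hc] := H2 a na.
have jc : (j : nat) != c.
  by apply/eqP => /val_inj ejc; subst j; rewrite he in hc.
pose lo := minn j c; pose hi := maxn j c.
apply: (cut_lemma (S := fun v : V =>
   Sgen false false (fun b p => (b == a) && (lo < p <= hi)) v)).
  move=> [b t] hf; rewrite ends_pos /= !Sgen_pos //; last exact: ltnW.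
  case: (eqVneq b a) => [eb|nb]; last first.
    by repeat case: ifP => ?.
  subst b.
  have tj : (t : nat) != j.
    apply: contraTneq hf => /val_inj ->; by rewrite inFD eqxx.
  have tc : (t : nat) != c.
    apply: contraTneq hf => /val_inj ->; by rewrite inFD (negbTE hc) andbF.
  have := ltn_ord t; have := ltn_ord j; have := ltn_ord c; rewrite /lo /hi.
  move: tj tc jc.
  move=> *; repeat case: ifP => ?; lia.
rewrite /= !Sgen_pos //; last exact: ltnW.
have := ltn_ord j; have := ltn_ord c; rewrite /lo /hi eqxx /=. move: jc.
repeat case: ifP => ?; lia.
Qed.

Lemma cardE : #|{: E}| = l * k.
Proof. by rewrite card_prod !card_ord mulnC. Qed.

Lemma cardV1 : #|{: V}| - 1 = (l - 1) * k + 1.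
Proof. by rewrite card_ord mulnC subn1 addn1. Qed.

Lemma O_lt (e : E) : e.2 * k + e.1 < #|{: E}|.
Proof.
rewrite cardE; have := ltn_ord e.1; have := ltn_ord e.2.
have := @mk k e.2 l hk; lia.
Qed.

Definition Ord (e : E) : 'I_#|{: E}| := Ordinal (O_lt e).

Lemma Ord_inj : injective Ord.
Proof.
move=> [b1 t1] [b2 t2] /(congr1 val) /= h.
have := ltn_ord b1; have := ltn_ord b2.
have := @mk k t1 t2 hk => hm hb2 hb1.
have [et eb] : (t1 : nat) = t2 /\ (b1 : nat) = b2 by lia.
by congr pair; apply: val_inj.
Qed.

Lemma dE (m x i : nat) : x < m -> i < m ->
  (x + m - i) %% m = if i <= x then x - i else x + m - i.
Proof.
move=> xm im; case: ifP => h.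
  by rewrite -addnBAC // modnDr modn_small //; lia.
rewrite modn_small //; lia.
Qed.

Lemma window (i : 'I_#|{: E}|) :
  spanning_tree ends [set e | (Ord e + #|{: E}| - i) %% #|{: E}| < #|{: V}| - 1].
Proof.
have im : (i : nat) < l * k by rewrite -cardE.
have ie := divn_eq i k.
have qil : i %/ k < l by rewrite ltn_divLR.
have a0k := ltn_pmod i hk.
move: ie qil a0k; set qi := i %/ k; set a0v := i %% k => ie qil a0k.
have memW (b : 'I_k) (t : 'I_l) :
  ((b, t) \in [set e | (Ord e + #|{: E}| - i) %% #|{: E}| < #|{: V}| - 1]) =
  ((if qi * k + a0v <= t * k + b then t * k + b - (qi * k + a0v)
    else t * k + b + l * k - (qi * k + a0v)) < (l - 1) * k + 1).
  rewrite inE cardV1 /= (dE (O_lt (b, t)) (ltn_ord i)).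
  by rewrite ie cardE.
apply: (@theta_tree _ (Ordinal a0k)).
- by move=> t; rewrite memW; apply: A.
- move=> b hb.
  have hb' : (b : nat) != a0v by apply: contra hb => /eqP h; apply/eqP/val_inj.
  have [t tl ht] := C hk hl a0k qil (ltn_ord b) hb'.
  by exists (Ordinal tl); rewrite memW -leqNgt.
- move=> b t1 t2; rewrite !memW -!leqNgt => h1 h2.
  apply: val_inj; exact: (B hk hl a0k qil (ltn_ord t1) (ltn_ord t2) (ltn_ord b) h1 h2).
Qed.

End Theta.

Theorem mainTheorem9 (k l : nat) (hk : 1 <= k) (hl : 1 <= l) :
  @cyclically_orderable (theta_V k l) (theta_E k l) (@theta_ends k l).
Proof.
exists (Ord hk hl); split; last exact: window.
by apply: inj_card_bij; [exact: Ord_inj | rewrite card_ord].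
Qed.
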